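(* Let $k$ be a commutative ring and $H$ a Hopf algebra over $k$, finitely generated projective as a $k$-module, with counit $\epsilon$. Let $P$ be an invertible $k$-module, $Q=P^*$, and let $\psi:H\to P$ be a Frobenius homomorphism satisfying $\sum a_{(1)}\otimes\psi(a_{(2)})=1_H\otimes\psi(a)$ for all $a\in H$, with left norm $N=\sum_iN_i\otimes q_i\in H\otimes Q$. Then $H$ is a separable $k$-algebra if and only if the element $\sum_i\epsilon(N_i)q_i\in Q$ is Morita-invertible.
   Context: $\psi$ is a Frobenius homomorphism means that $x\mapsto(y\mapsto\psi(yx))$ is a bijection $H\to\mathrm{Hom}_k(H,P)$. The left norm of $\psi$ is the unique $N=\sum_iN_i\otimes q_i\in H\otimes Q$ with $\sum_i q_i(\psi(aN_i))=\epsilon(a)$ for all $a\in H$. An element $q\in Q$ is Morita-invertible if there is $p\in P$ with $q(p)=1_k$. *)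

(* Defs.v *)
From HB Require Import structures.
From mathcomp Require Import all_boot all_order all_algebra.
Set Implicit Arguments. Unset Strict Implicit. Unset Printing Implicit Defensive.
Import GRing.Theory.
Local Open Scope ring_scope.

Section HopfDefs.
Variable k : comPzRingType.

Definition klinear (M W : lmodType k) (f : M -> W) : Prop :=
  forall (a : k) (x y : M), f (a *: x + y) = a *: f x + f y.

Definition kbilinear (M N W : lmodType k) (f : M -> N -> W) : Prop :=
  (forall n : N, klinear (fun m => f m n)) /\ (forall m : M, klinear (f m)).

Definition ktrilinear (M N L W : lmodType k) (f : M -> N -> L -> W) : Prop :=
  [/\ forall (n : N) (l : L), klinear (fun m => f m n l),
      forall (m : M) (l : L), klinear (fun n => f m n l)
    & forall (m : M) (n : N), klinear (f m n)].

(* Elements of M (x)_k N are represented by finite lists of pairs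
   [:: (m_1, n_1); ...] standing for sum_i m_i (x) n_i.  Two such lists
   represent the same tensor iff every bilinear map takes the same value
   on them (universal property of the tensor product). *)
Definition teq (M N : lmodType k) (s t : seq (M * N)) : Prop :=
  forall (W : lmodType k) (f : M -> N -> W), kbilinear f ->
    \sum_(x <- s) f x.1 x.2 = \sum_(x <- t) f x.1 x.2.

Definition teq3 (M N L : lmodType k) (s t : seq (M * N * L)) : Prop :=
  forall (W : lmodType k) (f : M -> N -> L -> W), ktrilinear f ->
    \sum_(x <- s) f x.1.1 x.1.2 x.2 = \sum_(x <- t) f x.1.1 x.1.2 x.2.

Definition is_tensor_product (M N T : lmodType k) (beta : M -> N -> T) : Prop :=
  kbilinear beta /\
  forall (W : lmodType k) (f : M -> N -> W), kbilinear f ->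
    (exists g : T -> W, klinear g /\ forall m n, f m n = g (beta m n)) /\
    (forall g g' : T -> W, klinear g -> klinear g' ->
       (forall m n, g (beta m n) = g' (beta m n)) -> forall t, g t = g' t).

Definition fg_projective (M : lmodType k) : Prop :=
  exists (n : nat) (f : M -> 'rV[k]_n) (g : 'rV[k]_n -> M),
    [/\ klinear f, klinear g & cancel f g].

(* invertible k-module: there is Q' with P (x)_k Q' isomorphic to k *)
Definition invertible_module (P : lmodType k) : Prop :=
  exists (Q' : lmodType k) (beta : P -> Q' -> k^o), is_tensor_product beta.

(* (Q, ev) is the dual module P^* = Hom_k(P, k), with ev q p = q(p) *)
Definition is_dual (P Q : lmodType k) (ev : Q -> P -> k^o) : Prop :=
  kbilinear ev /\
  forall phi : P -> k^o, klinear phi ->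
    exists q : Q, (forall p, ev q p = phi p) /\
      forall q' : Q, (forall p, ev q' p = phi p) -> q' = q.

(* Hopf algebra structure on the k-algebra H, with comultiplication
   Delta (a representative of Delta(a) in H (x) H), counit eps, antipode S. *)
Definition is_hopf_algebra (H : algType k) (Delta : H -> seq (H * H))
    (eps : H -> k^o) (S : H -> H) : Prop :=
  [/\
      forall (a : k) (x y : H),
        teq (Delta (a *: x + y))
            ([seq (a *: u.1, u.2) | u <- Delta x] ++ Delta y),
      forall x y : H,
        teq (Delta (x * y))
            [seq (u.1 * v.1, u.2 * v.2) | u <- Delta x, v <- Delta y],
      teq (Delta 1) [:: (1, 1)],
      forall x : H,
        teq3 (flatten [seq [seq (v.1, v.2, u.2) | v <- Delta u.1] | u <- Delta x])
             (flatten [seq [seq (u.1, v.1, v.2) | v <- Delta u.2] | u <- Delta x])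
    & [/\
          [/\ klinear eps,
          (forall x y : H, eps (x * y) = eps x * eps y) &
          eps 1 = 1],
          (forall x : H, \sum_(u <- Delta x) eps u.1 *: u.2 = x),
          (forall x : H, \sum_(u <- Delta x) eps u.2 *: u.1 = x)
        & [/\
              klinear S,
              (forall x : H, \sum_(u <- Delta x) S u.1 * u.2 = eps x *: 1)
            & (forall x : H, \sum_(u <- Delta x) u.1 * S u.2 = eps x *: 1)]]].

Definition frobenius_hom (H : algType k) (P : lmodType k) (psi : H -> P) : Prop :=
  klinear psi /\
  forall phi : H -> P, klinear phi ->
    exists x : H, (forall y, phi y = psi (y * x)) /\
      forall x' : H, (forall y, phi y = psi (y * x')) -> x' = x.

Definition left_norm (H : algType k) (P Q : lmodType k) (ev : Q -> P -> k^o)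
    (psi : H -> P) (eps : H -> k^o) (N : seq (H * Q)) : Prop :=
  forall a : H, \sum_(u <- N) ev u.2 (psi (a * u.1)) = eps a.

Definition morita_invertible (P Q : lmodType k) (ev : Q -> P -> k^o) (q : Q) : Prop :=
  exists p : P, ev q p = 1.

Definition separable_algebra (H : algType k) : Prop :=
  exists e : seq (H * H),
    \sum_(u <- e) u.1 * u.2 = 1 /\
    forall a : H, teq [seq (a * u.1, u.2) | u <- e] [seq (u.1, u.2 * a) | u <- e].

End HopfDefs.

(* Main.v *)
Require Import Defs.
From HB Require Import structures.
From mathcomp Require Import all_boot all_order all_algebra ring.
Set Implicit Arguments. Unset Strict Implicit.

Import GRing.Theory.
Local Open Scope ring_scope.

Section Lin.
Variable k : comPzRingType.

Lemma kl0 (M W : lmodType k) (f : M -> W) : klinear f -> f 0 = 0.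
Proof.
move=> hf; have := hf (-1) 0 0; rewrite scaler0 addr0 scaleN1r addNr; done.
Qed.

Lemma klD (M W : lmodType k) (f : M -> W) : klinear f -> forall x y, f (x + y) = f x + f y.
Proof. by move=> hf x y; have := hf 1 x y; rewrite !scale1r. Qed.

Lemma klZ (M W : lmodType k) (f : M -> W) : klinear f -> forall a x, f (a *: x) = a *: f x.
Proof. by move=> hf a x; have := hf a x 0; rewrite addr0 (kl0 hf) addr0. Qed.

Lemma klsum (M W : lmodType k) (f : M -> W) : klinear f ->
  forall (I : Type) (r : seq I) (P : pred I) (F : I -> M),
  f (\sum_(i <- r | P i) F i) = \sum_(i <- r | P i) f (F i).
Proof.
move=> hf I r P F; elim: r => [|x r IH]; first by rewrite !big_nil (kl0 hf).
by rewrite !big_cons; case: (P x); rewrite ?(klD hf) IH.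
Qed.

Lemma klscal (W : lmodType k) (f : k^o -> W) : klinear f -> forall c : k^o, f c = c *: f 1.
Proof. by move=> hf c; rewrite -(klZ hf) /=; congr f; rewrite /GRing.scale /= mulr1. Qed.

Lemma nondeg (P Q' : lmodType k) (beta : P -> Q' -> k^o) :
  is_tensor_product beta -> forall z, (forall y, beta z y = 0) -> z = 0.
Proof.
move=> [[hb1 hb2] hu] z hz.
have Hm : forall m, exists g : k^o -> P, klinear g /\ forall x y, beta m y *: x = g (beta x y).
  move=> m.
  have bl : kbilinear (fun (x : P) (y : Q') => beta m y *: x).
    split.
    - move=> y a x1 x2; by rewrite scalerDr !scalerA mulrC.
    - move=> x a y1 y2; rewrite (hb2 m a y1 y2) scalerDl.
      by rewrite [_ *: beta m y1]/GRing.scale /= -scalerA.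
  by have [[g [hg1 hg2]] _] := hu P _ bl; exists g.
have bl0 : kbilinear (fun (_ : P) (_ : Q') => (0 : P)).
  by split=> ? ? ? ?; rewrite scaler0 addr0.
have [_ hU] := hu P _ bl0.
have l1 : klinear (fun c : k^o => c *: z).
  by move=> a c1 c2; rewrite scalerDl scalerA.
have l2 : klinear (fun c : k^o => (0 : P)).
  by move=> a c1 c2; rewrite scaler0 addr0.
have := hU _ _ l1 l2 _ 1; rewrite scale1r; apply.
move=> m n; have [g [hg1 hg2]] := Hm m.
by rewrite hg2 hz (kl0 hg1).
Qed.

Lemma rank1 (P : lmodType k) (ev0 : P -> k^o) (p : P) :
  invertible_module P -> klinear ev0 -> ev0 p = 1 -> forall x, x = ev0 x *: p.
Proof.
move=> [Q' [beta hT]] hl hp.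
have hT' := hT; move: hT' => [[hb1 hb2] hu].
have bl : kbilinear (fun (x : P) (y : Q') => (ev0 x * beta p y : k^o)).
  split.
  - move=> y a x1 x2; rewrite hl /GRing.scale /=; ring.
  - move=> x a y1 y2; rewrite hb2 /GRing.scale /=; ring.
have [[h [hh1 hh2]] _] := hu _ _ bl.
set c := h 1.
have E : forall x, ev0 x *: p = c *: x.
  move=> x; apply/eqP; rewrite -subr_eq0; apply/eqP; apply: (nondeg hT) => y.
  have lin := hb1 y.
  have hc : forall b, h b = b * c by move=> b; rewrite (klscal hh1).
  rewrite (klD lin) -scaleNr !(klZ lin).
  change (ev0 x * beta p y + (- c) * beta x y = 0).
  rewrite hh2 hc; ring.
have c1 : c = 1.
  have := E p; rewrite hp scale1r => /(congr1 ev0); rewrite (klZ hl) hp.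
  by rewrite /GRing.scale /= mulr1.
by move=> x; rewrite E c1 scale1r.
Qed.

End Lin.

Local Open Scope ring_scope.


Section Main.
Variables (k : comPzRingType) (H : algType k)
    (Delta : H -> seq (H * H)) (eps : H -> k^o) (S : H -> H)
    (P Q : lmodType k) (ev : Q -> P -> k^o) (psi : H -> P) (N : seq (H * Q)).
Hypotheses (hH : is_hopf_algebra Delta eps S) (hev : is_dual ev)
  (hpsi : frobenius_hom psi) (hN : left_norm ev psi eps N).

Let q := \sum_(u <- N) eps u.1 *: u.2.

Lemma fwd : separable_algebra H -> morita_invertible ev q.
Proof.
move: hH => [_ _ _ _ [[el emul e1] _ _ _]].
move: hev => [[ev1 ev2] _].
move: hpsi => [psil _].
move=> [e [esum eC]].
set t' := \sum_(u <- e) eps u.1 *: u.2.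
have bl : kbilinear (fun (v w : H) => eps v *: w).
  split.
  - move=> w a v1 v2; rewrite el scalerDl; rewrite scalerA //.
  - move=> v a w1 w2; rewrite scalerDr !scalerA mulrC //.
have ti : forall a, t' * a = eps a *: t'.
  move=> a; have := eC a _ _ bl; rewrite !big_map /= => E.
  rewrite /t' mulr_suml scaler_sumr.
  transitivity (\sum_(u <- e) eps u.1 *: (u.2 * a)).
    by apply: eq_bigr => u _; rewrite scalerAl.
  rewrite -E; apply: eq_bigr => u _; rewrite emul scalerA //.
have et : eps t' = 1.
  rewrite /t' (klsum el) -e1 -esum (klsum el); apply: eq_bigr => u _.
  by rewrite (klZ el) emul.
exists (psi t').
rewrite /q (klsum (ev1 _)) -et -(hN t'); apply: eq_bigr => u _.
rewrite (klZ (ev1 _)) ti (klZ psil) (klZ (ev2 _)) //.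
Qed.


Hypotheses (hfg : fg_projective H) (hinv : invertible_module P)
  (hcond : forall a : H, teq [seq (u.1, psi u.2) | u <- Delta a] [:: (1, psi a)]).

Lemma bwd : morita_invertible ev q -> separable_algebra H.
Proof.
move=> [p hp].
move: (hH) => [Dlin Dmul _ Dco [[el emul e1] cu1 cu2 [Sl Santi1 _]]].
move: (hev) => [[ev1 ev2] _].
move: (hpsi) => [psil psiF].
have rk := rank1 hinv (ev2 q) hp.
set lam := fun y => ev q (psi y).
have laml : klinear lam by move=> a x y; rewrite /lam psil (ev2 q).
have psiE : forall y, psi y = lam y *: p by move=> y; rewrite {1}(rk (psi y)).
set t := \sum_(u <- N) ev u.2 p *: u.1.
have lamt : forall a, lam (a * t) = eps a.
  move=> a; rewrite -(hN a) /t mulr_sumr (klsum laml); apply: eq_bigr => u _.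
  rewrite -scalerAr (klZ laml) psiE (klZ (ev2 _)).
  change (ev u.2 p * lam (a * u.1) = lam (a * u.1) * ev u.2 p); exact: mulrC.
have et : eps t = 1.
  rewrite -hp /q (klsum el) (klsum (ev1 _)); apply: eq_bigr => u _.
  rewrite (klZ el) (klZ (ev1 _)); exact: mulrC.
have mull : forall a : H, klinear (fun y : H => y * a).
  by move=> a c x y; rewrite mulrDl scalerAl.
have mulr : forall a : H, klinear (fun y : H => a * y).
  by move=> a c x y; rewrite mulrDr scalerAr.
have finj : forall a b, (forall y, lam (y * a) = lam (y * b)) -> a = b.
  move=> a b hab.
  have phil : klinear (fun y => psi (y * a)).
    by move=> c x y; rewrite (klD (mull a)) (klZ (mull a)) psil.
  have [x [_ hu]] := psiF _ phil.
  by rewrite (hu a (fun _ => erefl)) (hu b) // => y; rewrite !psiE hab.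
have fsurj : forall f : H -> k^o, klinear f -> exists x, forall y, lam (y * x) = f y.
  move=> f fl.
  have phil : klinear (fun y => f y *: p).
    by move=> c x y; rewrite fl scalerDl scalerA.
  have [x [hx _]] := psiF _ phil.
  exists x => y; rewrite /lam -hx (klZ (ev2 _)) hp.
  change (f y * 1 = f y); exact: mulr1.
move: hfg => [n [f [g [fl gl fK]]]].
have fjl : forall j : 'I_n, klinear (fun y => (f y 0 j : k^o)).
  by move=> j c x y; rewrite fl !mxE.
have /fin_all_exists [x hx] : forall j : 'I_n, exists xj, forall y, lam (y * xj) = f y 0 j.
  by move=> j; apply: fsurj.
set y := fun j : 'I_n => g (delta_mx 0 j).
have exp1 : forall a, a = \sum_(j < n) lam (a * x j) *: y j.
  move=> a; rewrite -{1}(fK a) {1}(row_sum_delta (f a)) (klsum gl).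
  by apply: eq_bigr => j _; rewrite (klZ gl) hx.
have exp2 : forall a, a = \sum_(j < n) lam (y j * a) *: x j.
  move=> a; apply: finj => c.
  rewrite mulr_sumr (klsum laml) {1}(exp1 c) mulr_suml (klsum laml).
  apply: eq_bigr => j _; rewrite -scalerAr -scalerAl !(klZ laml).
  change (lam (c * x j) * lam (y j * a) = lam (y j * a) * lam (c * x j)); exact: mulrC.
set s := \sum_(j < n) eps (x j) *: y j.
have lams : forall a, lam (s * a) = eps a.
  move=> a; rewrite {2}(exp2 a) /s mulr_suml !(klsum _) //.
  apply: eq_bigr => j _; rewrite -scalerAl (klZ laml) (klZ el).
  change (eps (x j) * lam (y j * a) = lam (y j * a) * eps (x j)); exact: mulrC.
have es : eps s = 1 by rewrite -lamt lams et.
have lamint : forall a, \sum_(u <- Delta a) lam u.2 *: u.1 = lam a *: 1.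
  move=> a.
  have bl : kbilinear (fun (h : H) (z : P) => ev q z *: h).
    split.
    - by move=> z c h1 h2; rewrite scalerDr !scalerA mulrC.
    - by move=> h c z1 z2; rewrite (ev2 q) scalerDl scalerA.
  by move: (hcond a) => /(_ _ _ bl); rewrite big_map big_seq1.
have key : forall b, \sum_(u <- Delta s) lam (u.2 * b) *: S u.1 = b.
  move=> b.
  transitivity (\sum_(u <- Delta s) \sum_(v <- Delta (u.2 * b)) lam v.2 *: (S u.1 * v.1)).
    apply: eq_bigr => u _.
    rewrite -{1}(mulr1 (S u.1)) scalerAr -lamint mulr_sumr.
    by apply: eq_bigr => v _; rewrite scalerAr.
  transitivity (\sum_(u <- Delta s) \sum_(w <- Delta u.2) \sum_(z <- Delta b)
                  lam (w.2 * z.2) *: (S u.1 * (w.1 * z.1))).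
    apply: eq_bigr => u _.
    have bl : kbilinear (fun al be : H => lam be *: (S u.1 * al)).
      split.
      - move=> be c a1 a2; rewrite mulrDr scalerDr -scalerAr !scalerA mulrC //.
      - move=> al c b1 b2; rewrite laml scalerDl scalerA //.
    move: (Dmul u.2 b) => /(_ _ _ bl) ->.
    by rewrite big_allpairs_dep.
  pose G := fun a1 a2 a3 : H => \sum_(z <- Delta b) lam (a3 * z.2) *: (S a1 * (a2 * z.1)).
  have Gl : ktrilinear G.
    split.
    - move=> a2 a3 c x1 x2; rewrite /G scaler_sumr -big_split /=; apply: eq_bigr => z _.
      rewrite Sl mulrDl scalerDr -scalerAl !scalerA mulrC //.
    - move=> a1 a3 c x1 x2; rewrite /G scaler_sumr -big_split /=; apply: eq_bigr => z _.
      rewrite mulrDl mulrDr scalerDr -scalerAl -scalerAr !scalerA mulrC //.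
    - move=> a1 a2 c x1 x2; rewrite /G scaler_sumr -big_split /=; apply: eq_bigr => z _.
      rewrite (klD (mull _)) (klZ (mull _)) laml scalerDl scalerA //.
  transitivity (\sum_(u <- Delta s) \sum_(w <- Delta u.2) G u.1 w.1 w.2) => //.
  move: (Dco s) => /(_ _ _ Gl); rewrite !big_flatten /= !big_map.
  under [in RHS]eq_bigr do rewrite big_map.
  under [in LHS]eq_bigr do rewrite big_map.
  move=> <- /=.
  transitivity (\sum_(u <- Delta s) \sum_(z <- Delta b) lam (u.2 * z.2) *: (eps u.1 *: z.1)).
    apply: eq_bigr => u _; rewrite /G exchange_big /=; apply: eq_bigr => z _.
    rewrite -scaler_sumr; congr (_ *: _).
    transitivity ((\sum_(v <- Delta u.1) S v.1 * v.2) * z.1).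
      by rewrite mulr_suml; apply: eq_bigr => v _; rewrite mulrA.
    by rewrite Santi1 -scalerAl mul1r.
  rewrite exchange_big /=; transitivity (\sum_(z <- Delta b) eps z.2 *: z.1); last exact: cu2 b.
  apply: eq_bigr => z _.
  transitivity ((\sum_(u <- Delta s) eps u.1 * lam (u.2 * z.2)) *: z.1).
    by rewrite scaler_suml; apply: eq_bigr => u _; rewrite scalerA mulrC.
  congr (_ *: _).
  have -> : eps z.2 = lam ((\sum_(u <- Delta s) eps u.1 *: u.2) * z.2) by rewrite cu1 lams.
  rewrite mulr_suml (klsum laml); apply: eq_bigr => u _; rewrite -scalerAl (klZ laml) //.
have sum1 : \sum_(j < n) x j * y j = 1.
  have E : \sum_(u <- Delta s) S u.1 * u.2 = 1 by rewrite Santi1 es scale1r.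
  rewrite -E; symmetry.
  transitivity (\sum_(u <- Delta s) \sum_(j < n) lam (u.2 * x j) *: (S u.1 * y j)).
    apply: eq_bigr => u _; rewrite {1}(exp1 u.2) mulr_sumr.
    by apply: eq_bigr => j _; rewrite scalerAr.
  rewrite exchange_big; apply: eq_bigr => j _ /=.
  rewrite -{2}(key (x j)) mulr_suml; apply: eq_bigr => u _; by rewrite scalerAl.
exists [seq (x j, y j) | j <- index_enum 'I_n]; split.
  by rewrite big_map.
move=> b W F [F1 F2]; rewrite !big_map /=; symmetry.
transitivity (\sum_(j <- index_enum 'I_n) \sum_(i < n) lam (y j * (b * x i)) *: F (x j) (y i)).
  apply: eq_bigr => j _; rewrite {1}(exp1 (y j * b)) (klsum (F2 _)).
  by apply: eq_bigr => i _; rewrite (klZ (F2 _)) mulrA.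
rewrite exchange_big; apply: eq_bigr => i _ /=.
rewrite {2}(exp2 (b * x i)) (klsum (F1 _)); apply: eq_bigr => j _.
by rewrite (klZ (F1 _)).
Qed.

End Main.

Unset Implicit Arguments.

Theorem theorem6p2 (k : comPzRingType) (H : algType k)
    (Delta : H -> seq (H * H)) (eps : H -> k^o) (S : H -> H)
    (P Q : lmodType k) (ev : Q -> P -> k^o) (psi : H -> P) (N : seq (H * Q)) :
  is_hopf_algebra Delta eps S ->
  fg_projective H ->
  invertible_module P ->
  is_dual ev ->
  frobenius_hom psi ->
  (forall a : H, teq [seq (u.1, psi u.2) | u <- Delta a] [:: (1, psi a)]) ->
  left_norm ev psi eps N ->
  separable_algebra H <->
  morita_invertible ev (\sum_(u <- N) eps u.1 *: u.2).
Proof.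
move=> hH hfg hinv hev hpsi hcond hN; split.
- exact: (fwd hH hev hpsi hN).
- exact: (bwd hH hev hpsi hN hfg hinv hcond).
Qed.
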